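(* Let $SO$ be an inflationary semi-overlap function and define $I_{SO}:[0,1]^2\to[0,1]$ by $I_{SO}(u,v)=\sup\{w\in[0,1]\mid SO(u,w)\le v\}$. Then $I_{SO}$ is a fuzzy implication, and $SO$ and $I_{SO}$ satisfy the residuation property: for all $u,v,w\in[0,1]$, $SO(u,w)\le v \iff I_{SO}(u,v)\ge w$.
   Context: A semi-overlap function is a function $SO:[0,1]^2\to[0,1]$ such that for all $u,v\in[0,1]$: (S1) $SO(u,v)=SO(v,u)$; (S2) if $uv=0$ then $SO(u,v)=0$; (S3) if $uv=1$ then $SO(u,v)=1$; (S4) $SO$ is increasing in each variable; (S5) $SO$ is left-continuous, meaning that for every $u\in[0,1]$ and every nonempty family $\{v_i\mid i\in I\}\subseteq[0,1]$, $SO(u,\sup_{i\in I}v_i)=\sup_{i\in I}SO(u,v_i)$. It is inflationary if $SO(u,1)\ge u$ for all $u$. A fuzzy implication is a function $I:[0,1]^2\to[0,1]$ such that: $u\le v$ implies $I(v,w)\le I(u,w)$; $v\le w$ implies $I(u,v)\le I(u,w)$; $I(0,0)=1$; $I(1,1)=1$; $I(1,0)=0$. *)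

(* Defs.v *)
From Stdlib Require Import Reals.
From Coquelicot Require Import Coquelicot.
Open Scope R_scope.

Definition in01 (x : R) : Prop := 0 <= x <= 1.

(* Semi-overlap function on [0,1]^2 (values outside [0,1]^2 are irrelevant). *)
Definition semi_overlap (SO : R -> R -> R) : Prop :=
  (forall u v, in01 u -> in01 v -> in01 (SO u v)) /\
  (forall u v, in01 u -> in01 v -> SO u v = SO v u) /\
  (forall u v, in01 u -> in01 v -> u * v = 0 -> SO u v = 0) /\
  (forall u v, in01 u -> in01 v -> u * v = 1 -> SO u v = 1) /\
  (forall u v w, in01 u -> in01 v -> in01 w -> v <= w ->
              SO u v <= SO u w) /\
  (* S5: left continuity: for every nonempty family {v_i | i in I} in [0,1],
     SO(u, sup_i v_i) = sup_i SO(u, v_i) *)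
  (forall (u : R) (I : Type) (vf : I -> R) (s : R), in01 u ->
     inhabited I -> (forall i, in01 (vf i)) ->
     is_lub (fun x => exists i, x = vf i) s ->
     is_lub (fun y => exists i, y = SO u (vf i)) (SO u s)).

Definition inflationary (SO : R -> R -> R) : Prop :=
  forall u, in01 u -> SO u 1 >= u.

Definition fuzzy_implication (I : R -> R -> R) : Prop :=
  (forall u v, in01 u -> in01 v -> in01 (I u v)) /\
  (forall u v w, in01 u -> in01 v -> in01 w -> u <= v -> I v w <= I u w) /\
  (forall u v w, in01 u -> in01 v -> in01 w -> v <= w -> I u v <= I u w) /\
  I 0 0 = 1 /\ I 1 1 = 1 /\ I 1 0 = 0.

Definition I_SO (SO : R -> R -> R) (u v : R) : R :=
  real (Lub_Rbar (fun w => in01 w /\ SO u w <= v)).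

(* Main.v *)
Require Import Defs.
From Stdlib Require Import Reals Lra.
From Coquelicot Require Import Coquelicot.
Open Scope R_scope.

Lemma iso_lub (SO : R -> R -> R) (u v : R) :
  semi_overlap SO -> in01 u -> in01 v ->
  in01 (I_SO SO u v) /\
  (forall w, in01 w -> SO u w <= v -> w <= I_SO SO u v) /\
  (forall b, (forall w, in01 w /\ SO u w <= v -> w <= b) -> I_SO SO u v <= b).
Proof.
  intros [H01 [HS1 [HS2 [HS3 [HS4 HS5]]]]] Hu Hv.
  unfold I_SO.
  set (E := fun w => in01 w /\ SO u w <= v).
  assert (E0 : E 0).
  { split. unfold in01; lra. rewrite HS2; unfold in01 in *; try lra; ring. }
  destruct (Lub_Rbar_correct E) as [Hub Hleast].
  assert (Hle1 : Rbar_le (Lub_Rbar E) 1).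
  { apply Hleast. intros w [Hw _]. simpl. unfold in01 in Hw. lra. }
  assert (Hge0 : Rbar_le 0 (Lub_Rbar E)) by (apply Hub; exact E0).
  destruct (Lub_Rbar E) as [s| |]; simpl in *; try contradiction.
  split; [unfold in01; lra|]. split.
  - intros w Hw Hs. apply (Hub w). split; assumption.
  - intros b Hb. apply (Hleast (Finite b)). intros w Hw. apply Hb. exact Hw.
Qed.

Lemma iso_resid (SO : R -> R -> R) (u v w : R) :
  semi_overlap SO -> in01 u -> in01 v -> in01 w ->
  (SO u w <= v <-> I_SO SO u v >= w).
Proof.
  intros HSO Hu Hv Hw.
  destruct (iso_lub SO u v HSO Hu Hv) as [Hs01 [Hs1 Hs2]].
  pose proof HSO as [H01 [HS1 [HS2 [HS3 [HS4 HS5]]]]].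
  split.
  - intros H. apply Rle_ge. apply Hs1; assumption.
  - intros H. set (s := I_SO SO u v) in *.
    assert (Hsv : SO u s <= v).
    { set (Ity := {w : R | in01 w /\ SO u w <= v}).
      set (vf := fun i : Ity => proj1_sig i).
      assert (E0 : in01 0 /\ SO u 0 <= v).
      { split. unfold in01; lra. rewrite HS2; unfold in01 in *; try lra; ring. }
      assert (Hl : is_lub (fun x => exists i, x = vf i) s).
      { split.
        - intros x [[y Hy] ->]. unfold vf; simpl. apply Hs1; apply Hy.
        - intros b Hb. apply Hs2. intros y Hy. apply Hb. exists (exist _ y Hy). reflexivity. }
      destruct (HS5 u Ity vf s Hu (inhabits (exist _ 0 E0))
                  (fun i => proj1 (proj2_sig i)) Hl) as [_ Hl2].
      apply Hl2. intros y [[z Hz] ->]. unfold vf; simpl. apply Hz. }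
    eapply Rle_trans; [|exact Hsv]. apply HS4; auto. lra.
Qed.

Theorem proposition3p9 (SO : R -> R -> R) :
  semi_overlap SO -> inflationary SO ->
  fuzzy_implication (I_SO SO) /\
  (forall u v w, in01 u -> in01 v -> in01 w ->
     (SO u w <= v <-> I_SO SO u v >= w)).
Proof.
  intros HSO Hinf.
  pose proof HSO as [H01 [HS1 [HS2 [HS3 [HS4 HS5]]]]].
  assert (R01 : forall u v w, in01 u -> in01 v -> in01 w ->
     (SO u w <= v <-> I_SO SO u v >= w)) by (intros; apply iso_resid; auto).
  assert (I01 : forall u v, in01 u -> in01 v -> in01 (I_SO SO u v))
    by (intros; apply iso_lub; auto).
  assert (i0 : in01 0) by (unfold in01; lra).
  assert (i1 : in01 1) by (unfold in01; lra).
  split; [|exact R01].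
  split; [exact I01|]. split; [|split; [|split; [|split]]].
  - intros u v w Hu Hv Hw Huv.
    pose proof (I01 v w Hv Hw) as Hs.
    apply Rge_le, R01; auto.
    assert (SO v (I_SO SO v w) <= w) by (apply R01; auto; lra).
    eapply Rle_trans; [|exact H].
    rewrite (HS1 u), (HS1 v); try assumption; try apply HS4; assumption.
  - intros u v w Hu Hv Hw Hvw.
    pose proof (I01 u v Hu Hv) as Hs.
    apply Rge_le, R01; auto.
    assert (SO u (I_SO SO u v) <= v) by (apply R01; auto; lra).
    lra.
  - pose proof (I01 0 0 i0 i0) as Hs.
    assert (I_SO SO 0 0 >= 1) by (apply R01; auto; rewrite HS2; auto; lra).
    unfold in01 in Hs; lra.
  - pose proof (I01 1 1 i1 i1) as Hs.
    assert (I_SO SO 1 1 >= 1) by (apply R01; auto; rewrite HS3; auto; lra).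
    unfold in01 in Hs; lra.
  - pose proof (I01 1 0 i1 i0) as Hs.
    assert (H : SO 1 (I_SO SO 1 0) <= 0) by (apply R01; auto; lra).
    rewrite HS1 in H; auto. pose proof (Hinf _ Hs).
    unfold in01 in Hs; lra.
Qed.
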